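(* For every integer $q\equiv 4\pmod 6$ there exists a $q$-ary $3$-frameproof code of length $5$ and cardinality $\frac{5}{3}(q-1)^2+1$.
   Context: For $P\subseteq F^l$ over a finite alphabet $F$, $desc(P)=\{x\in F^l: \text{for every } i\in\{1,\ldots,l\} \text{ there is } y\in P \text{ with } x_i=y_i\}$. For an integer $c\geq 2$, a $c$-frameproof code of length $l$ is a subset $C\subseteq F^l$ with $desc(P)\cap C=P$ for every $P\subseteq C$ with $|P|\leq c$; it is $q$-ary if $|F|=q$. *)

(* Defs.v *)
From mathcomp Require Import all_boot.
Set Implicit Arguments. Unset Strict Implicit. Unset Printing Implicit Defensive.

Definition word (F : finType) (l : nat) := {ffun 'I_l -> F}.

Definition desc (F : finType) (l : nat) (P : {set word F l}) : {set word F l} :=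
  [set x : word F l | [forall i : 'I_l, [exists y in P, x i == y i]]].

Definition frameproof (F : finType) (l c : nat) (C : {set word F l}) : Prop :=
  forall P : {set word F l}, P \subset C -> #|P| <= c -> desc P :&: C = P.

(* Main.v *)
Require Import Defs.
From mathcomp Require Import all_boot all_algebra.
From mathcomp Require Import ring zify.
Set Implicit Arguments. Unset Strict Implicit. Unset Printing Implicit Defensive.
Import GRing.Theory.
Lemma cover (F : finType) (x : word F 5) (S : {set 'I_5}) (P : {set word F 5}) :
  3 < #|S| ->
  (forall i j y, i \in S -> j \in S -> i != j -> y \in P -> x i = y i -> x j = y j -> False) ->
  x \in desc P -> 3 < #|P|.
Proof.
move=> hS hag; rewrite inE => /forallP hd.
pose f i := odflt x [pick y in P | x i == y i].
have fP : forall i, f i \in P /\ x i = f i i.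
  move=> i; rewrite /f; case: pickP => [y /andP[-> /eqP ->]|none] //=.
  by move: (hd i) => /existsP[y /andP[yP /eqP e]]; move: (none y); rewrite yP e eqxx.
have inj : {in S &, injective f}.
  move=> i j iS jS e; apply/eqP; apply/negP => /negP ij.
  have [yP e1] := fP i; have [_ e2] := fP j.
  by apply: (hag i j (f i)) => //; rewrite e.
apply: (leq_trans hS); rewrite -(card_in_imset inj); apply: subset_leq_card.
by apply/subsetP => y /imsetP[i _ ->]; case: (fP i).
Qed.
Definition Lf (k a b : nat) : nat :=
  match k with 1 => a | 2 => b | 3 => a + b | _ => a + 2 * b end.

Lemma comb (d X Y Z c1 c2 c3 : int) : (d %| X)%Z -> (d %| Y)%Z ->
  Z = (c1*X + c2*Y + c3*d)%R -> (d %| Z)%Z.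
Proof. move=> /dvdzP[x ->] /dvdzP[y ->] ->; apply/dvdzP; exists (c1*x + c2*y + c3)%R; ring. Qed.

Lemma modeqZ m x y : x %% m = y %% m -> (m%:Z %| (x%:Z - y%:Z)%R)%Z.
Proof. move=> h; rewrite -eqz_mod_dvd; apply/eqP; rewrite !modz_nat h. done. Qed.

Lemma dvd_small m a a' : a < m -> a' < m -> (m%:Z %| (a%:Z - a'%:Z)%R)%Z -> a = a'.
Proof.
move=> ha ha'; rewrite -eqz_mod_dvd !modz_nat !modn_small //.
by move/eqP => [].
Qed.

Ltac cmb X Y a b c em := apply: (@comb _ _ _ _ a%Z b%Z c%Z X Y); (ring || (rewrite em; ring)).
Lemma Lf_inj m k l a b a' b' : odd m -> 0 < k < 5 -> 0 < l < 5 -> k != l ->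
  a < m -> b < m -> a' < m -> b' < m ->
  Lf k a b %% m = Lf k a' b' %% m -> Lf l a b %% m = Lf l a' b' %% m ->
  a = a' /\ b = b'.
Proof.
move=> om hk hl kl ha hb ha' hb' /modeqZ Hk /modeqZ Hl.
set h := (m.+1)./2.
have eh : (h%:Z * 2 = m%:Z + 1)%R.
  rewrite /h -PoszM -(@PoszD m 1) ; congr Posz.
  have E := odd_double_half m.+1. rewrite /= om /= add0n in E.
  by rewrite muln2 E addn1.
have em : (m%:Z = h%:Z * 2 - 1)%R by rewrite eh addrK.
suff [A B] : (m%:Z %| (a%:Z - a'%:Z)%R)%Z /\ (m%:Z %| (b%:Z - b'%:Z)%R)%Z.
  by split; apply: dvd_small; eassumption.
move: Hk Hl; case: k hk kl => [|[|[|[|[|k]]]]] //= _;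
 case: l hl => [|[|[|[|[|l]]]]] //= _ _; rewrite ?PoszD ?PoszM => X Y.
all: split; [first [cmb X Y 1%Z 0%Z 0%Z em | cmb X Y 0%Z 1%Z 0%Z em | cmb X Y (-1)%Z 1%Z 0%Z em | cmb X Y (-2)%Z 1%Z 0%Z em | cmb X Y 1%Z (-1)%Z 0%Z em | cmb X Y 2%Z (-1)%Z 0%Z em | cmb X Y 1%Z (-2)%Z 0%Z em | cmb X Y (-1)%Z 2%Z 0%Z em] | first [cmb X Y 0%Z 1%Z 0%Z em | cmb X Y 1%Z 0%Z 0%Z em | cmb X Y (-1)%Z 1%Z 0%Z em | cmb X Y 1%Z (-1)%Z 0%Z em | cmb X Y (-(Posz h))%R ((Posz h)) (-((Posz b) - (Posz b')))%R em | cmb X Y ((Posz h)) (-(Posz h))%R (-((Posz b) - (Posz b')))%R em]].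
Qed.
Definition mu (p i : nat) : nat := nth 0 (nth [::] [:: [::0;0;0;0;0]; [::0;0;0;1;2]; [::0;0;0;2;1]; [::0;1;2;0;0]; [::0;2;1;0;0]] p) i.
Definition kf (p i : nat) := (i + 5 - p) %% 5.
Definition I5 := iota 0 5.
Definition chk1 := all (fun p => all (fun p' => all (fun i => all (fun j => all (fun u => all (fun u' =>
  (i != j) ==> (i != p) ==> (j != p) ==> (i != p') ==> (j != p') ==>
  ((u + mu p i) %% 3 == (u' + mu p' i) %% 3) ==> ((u + mu p j) %% 3 == (u' + mu p' j) %% 3) ==>
  (p == p') && (u == u')) (iota 0 3)) (iota 0 3)) I5) I5) I5) I5.
Lemma chk1_ok : chk1. Proof. by vm_compute. Qed.
Definition chk2 := all (fun p => all (fun i => all (fun j =>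
  (i != p) ==> (0 < kf p i < 5) && ((j != p) ==> (i != j) ==> (kf p i != kf p j))) I5) I5) I5.
Lemma chk2_ok : chk2. Proof. by vm_compute. Qed.

Lemma F1 p p' i j u u' : p < 5 -> p' < 5 -> i < 5 -> j < 5 -> u < 3 -> u' < 3 ->
  i != j -> i != p -> j != p -> i != p' -> j != p' ->
  (u + mu p i) %% 3 = (u' + mu p' i) %% 3 -> (u + mu p j) %% 3 = (u' + mu p' j) %% 3 ->
  p = p' /\ u = u'.
Proof.
move=> hp hp' hi hj hu hu' h1 h2 h3 h4 h5 e1 e2.
have := chk1_ok; rewrite /chk1.
move=> /allP /(_ p); rewrite mem_iota hp => /(_ isT).
move=> /allP /(_ p'); rewrite mem_iota hp' => /(_ isT).
move=> /allP /(_ i); rewrite mem_iota hi => /(_ isT).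
move=> /allP /(_ j); rewrite mem_iota hj => /(_ isT).
move=> /allP /(_ u); rewrite mem_iota hu => /(_ isT).
move=> /allP /(_ u'); rewrite mem_iota hu' => /(_ isT).
rewrite h1 h2 h3 h4 h5 e1 e2 !eqxx /= => /andP[/eqP -> /eqP ->]; done.
Qed.

Lemma F2 p i j : p < 5 -> i < 5 -> j < 5 -> i != p ->
  (0 < kf p i < 5) /\ (j != p -> i != j -> kf p i != kf p j).
Proof.
move=> hp hi hj h.
have := chk2_ok; rewrite /chk2.
move=> /allP /(_ p); rewrite mem_iota hp => /(_ isT).
move=> /allP /(_ i); rewrite mem_iota hi => /(_ isT).
move=> /allP /(_ j); rewrite mem_iota hj => /(_ isT).
rewrite h /= => /andP[-> H]; split=> // a b; by move: H; rewrite a b.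
Qed.
Section Code.
Variable m : nat.
Hypothesis om : odd m.
Let m0 : 0 < m. Proof. by case: m om. Qed.
Definition T := ('I_5 * 'I_3 * 'I_m * 'I_m)%type.
Definition symv (p u a b i : nat) : nat :=
  if i == p then 0 else (3 * (Lf (kf p i) a b %% m) + (u + mu p i) %% 3).+1.
Definition cw (t : T) : word 'I_(3 * m).+1 5 :=
  [ffun i : 'I_5 => inord (symv t.1.1.1 t.1.1.2 t.1.2 t.2 i)].
Definition w0 : word 'I_(3 * m).+1 5 := [ffun _ => ord0].
Lemma w0E i : w0 i = ord0. Proof. by rewrite ffunE. Qed.
Definition code : {set word 'I_(3 * m).+1 5} := w0 |: [set cw t | t : T].

Lemma symv_lt p u a b i : symv p u a b i < (3 * m).+1.
Proof.
rewrite /symv; case: ifP => // _; rewrite ltnS.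
have := ltn_pmod (Lf (kf p i) a b) m0; have := ltn_pmod (u + mu p i) (isT : 0 < 3).
lia.
Qed.

Lemma cwE (t : T) i : val (cw t i) = symv t.1.1.1 t.1.1.2 t.1.2 t.2 i.
Proof. by rewrite /cw ffunE /= inordK // symv_lt. Qed.

Lemma cw_nz (t : T) (i : 'I_5) : (i : nat) != t.1.1.1 -> cw t i != ord0.
Proof. by move=> h; apply/eqP => /(congr1 val); rewrite cwE /symv (negbTE h). Qed.

Lemma cw_z (t : T) (i : 'I_5) : cw t i = ord0 -> (i : nat) = t.1.1.1.
Proof. by move=> h; apply/eqP; apply/negP => /negP /(cw_nz) /eqP. Qed.

Lemma key (t t' : T) (i j : 'I_5) : i != j -> (i:nat) != t.1.1.1 -> (j:nat) != t.1.1.1 ->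
  cw t i = cw t' i -> cw t j = cw t' j -> t = t'.
Proof.
case: t t' => [[[p u] a] b] [[[p' u'] a'] b'] /= ij hi hj.
move=> /(congr1 val); rewrite !cwE /= /symv (negbTE hi).
case: ifP => // hi' /eqP; rewrite eqSS => /eqP ei.
move=> /(congr1 val); rewrite !cwE /= /symv (negbTE hj).
case: ifP => // hj' /eqP; rewrite eqSS => /eqP ej.
have dec : forall s s' x x', s < 3 -> s' < 3 -> 3 * x + s = 3 * x' + s' -> x = x' /\ s = s'.
  move=> s s' x x' ? ? ?; lia.
have [ti si] := dec _ _ _ _ (ltn_pmod _ (isT : 0 < 3)) (ltn_pmod _ (isT : 0 < 3)) ei.
have [tj sj] := dec _ _ _ _ (ltn_pmod _ (isT : 0 < 3)) (ltn_pmod _ (isT : 0 < 3)) ej.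
have ij' : (i : nat) != j by [].
have [ep eu] := F1 (ltn_ord p) (ltn_ord p') (ltn_ord i) (ltn_ord j) (ltn_ord u) (ltn_ord u')
   ij' hi hj (negbT hi') (negbT hj') si sj.
have [ki kij] := F2 (ltn_ord p) (ltn_ord i) (ltn_ord j) hi.
have [kj _] := F2 (ltn_ord p) (ltn_ord j) (ltn_ord i) hj.
rewrite -ep in ti tj.
have [ea eb] := Lf_inj om ki kj (kij hj ij') (ltn_ord a) (ltn_ord b) (ltn_ord a') (ltn_ord b') ti tj.
have -> : p = p' by apply: val_inj.
have -> : u = u' by apply: val_inj.
have -> : a = a' by apply: val_inj.
have -> : b = b' by apply: val_inj.
done.
Qed.

Lemma cardS (p : 'I_5) : #|[set i : 'I_5 | i != p]| = 4.
Proof.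
have -> : [set i : 'I_5 | i != p] = [set~ p] by apply/setP => i; rewrite !inE.
by rewrite cardsC1 card_ord.
Qed.

Lemma two (p : 'I_5) : exists i j : 'I_5, [/\ i != j, i != p & j != p].
Proof.
have : 1 < #|[set i : 'I_5 | i != p]| by rewrite cardS.
case/card_gt1P => i [j] [].
by rewrite !inE => ? ? ?; exists i, j.
Qed.

Lemma cw_inj : injective cw.
Proof.
move=> t t' e; have [i [j [ij hi hj]]] := two t.1.1.1.
by apply: (key ij hi hj); rewrite e.
Qed.

Lemma w0_notin : w0 \notin [set cw t | t : T].
Proof.
apply/imsetP => -[t _ e]; have [i [j [ij hi hj]]] := two t.1.1.1.
by move: (cw_nz hi); rewrite -e w0E eqxx.
Qed.

Lemma card_code : #|code| = (5 * 3 * m * m).+1.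
Proof.
rewrite /code cardsU1 w0_notin card_imset; last exact: cw_inj.
rewrite !card_prod !card_ord add1n; lia.
Qed.

Lemma fp_code : frameproof 3 code.
Proof.
move=> P sPC cP; apply/setP => x; rewrite inE.
case xP : (x \in P).
  rewrite (subsetP sPC _ xP) andbT inE; apply/forallP => i; apply/existsP; exists x.
  by rewrite xP eqxx.
apply/negP => /andP[xd xC].
have yC : forall y, y \in P -> y \in code /\ y != x.
  by move=> y yP; split; [exact: (subsetP sPC) | apply/eqP => e; rewrite -e yP in xP].
suff : 3 < #|P| by rewrite ltnNge cP.
case/setU1P: xC => [ex | /imsetP[t _ ex]].
- apply: (cover (S := setT)) xd; first by rewrite cardsT card_ord.
  move=> i j y _ _ ij yP; have [] := yC y yP; rewrite ex.
  case/setU1P => [-> | /imsetP[t' _ ->] _]; first by rewrite eqxx.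
  rewrite !w0E => /esym/cw_z ei /esym/cw_z ej.
  by move: ij; rewrite -(inj_eq val_inj) /= ei ej eqxx.
- apply: (cover (S := [set i : 'I_5 | i != t.1.1.1])) xd; first by rewrite cardS.
  move=> i j y; rewrite !inE => hi hj ij yP; have [] := yC y yP; rewrite ex.
  case/setU1P => [-> _ | /imsetP[t' _ ->] ne].
    by rewrite w0E => /eqP; move: (cw_nz hi) => /negbTE ->.
  move=> ei ej; have := key ij hi hj ei ej; move=> e; by rewrite e eqxx in ne.
Qed.
End Code.

Theorem theorem3 (q : nat) :
  q %% 6 = 4 ->
  exists C : {set word 'I_q 5},
    frameproof 3 C /\ 3 * #|C| = 5 * (q - 1) ^ 2 + 3.
Proof.
move=> hq.
have [m [om em]] : exists m, odd m /\ q = (3 * m).+1.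
  exists (q %/ 6 * 2 + 1); split; first by rewrite oddD oddM /= andbF.
  rewrite {1}(divn_eq q 6) hq; lia.
subst q; exists (code m); split; first exact: fp_code.
rewrite card_code // subn1 /= !expnS expn0; nia.
Qed.
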